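(* Let $a_1,\dots,a_n\in\mathbb{R}^d$ be nonzero vectors. Let $a'_1,\dots,a'_{n'}$ be a second list obtained from the first by either adding one nonzero vector or removing one vector. Fix $T\ge1$, points $x^{(1)},\dots,x^{(T)}\in\mathbb{R}^d$, and a vector $g\in\mathbb{R}^d$. For the first list and each $t\in[T]$, define - $S^{(t)}=\{i:\langle\overline{a}_i,x^{(t)}\rangle\le0\}$ and $m^{(t)}=|S^{(t)}|$, where we assume $m^{(t)}\ge1$; - $\overline{\lambda}_i=\frac1T\sum_{t=1}^T\frac{\mathbf{1}[i\in S^{(t)}]}{m^{(t)}}$ for each $i$; - $P=\{i:\langle\overline{a}_i,g\rangle\ge0\}$ and $c=\sum_{i\in P}\overline{\lambda}_i\overline{a}_i$. Define $S'^{(t)}$, $m'^{(t)}$, $\overline{\lambda}'$, $P'$ and $c'$ in the same way from the second list, with the same $x^{(1)},\dots,x^{(T)}$ and $g$, and assume $m'^{(t)}\ge1$ for all $t$. Let $m=\min_{t\in[T]}\min(m^{(t)},m'^{(t)})$. Then $\|c-c'\|_2\le\frac{2}{m}$.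
   Context: For a nonzero vector $a$, $\overline{a}=a/\|a\|_2$. $\mathbf{1}[\cdot]$ denotes the indicator function. *)

(* Defs.v *)
From HB Require Import structures.
From mathcomp Require Import all_boot all_order all_algebra.
Set Implicit Arguments. Unset Strict Implicit. Unset Printing Implicit Defensive.
Import Order.TTheory GRing.Theory Num.Theory.
Local Open Scope ring_scope.

Section Defs.
Variables (R : rcfType) (d : nat).

Definition dotv (u v : 'rV[R]_d) : R := \sum_(j < d) u 0 j * v 0 j.
Definition norm2 (u : 'rV[R]_d) : R := Num.sqrt (dotv u u).
Definition unitv (u : 'rV[R]_d) : 'rV[R]_d := (norm2 u)^-1 *: u.

Definition vec (a : seq 'rV[R]_d) (i : 'I_(size a)) : 'rV[R]_d := nth 0 a i.

Definition Sset (a : seq 'rV[R]_d) (x : 'rV[R]_d) : {set 'I_(size a)} :=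
  [set i | dotv (unitv (vec i)) x <= 0].

Definition lambar (a : seq 'rV[R]_d) (T : nat) (xs : 'I_T -> 'rV[R]_d)
  (i : 'I_(size a)) : R :=
  T%:R^-1 * \sum_(t < T) ((i \in Sset a (xs t))%:R / (#|Sset a (xs t)|)%:R).

Definition Pset (a : seq 'rV[R]_d) (g : 'rV[R]_d) : {set 'I_(size a)} :=
  [set i | 0 <= dotv (unitv (vec i)) g].

Definition cvec (a : seq 'rV[R]_d) (T : nat) (xs : 'I_T -> 'rV[R]_d)
  (g : 'rV[R]_d) : 'rV[R]_d :=
  \sum_(i in Pset a g) lambar xs i *: unitv (vec i).

Definition neighbor (a a' : seq 'rV[R]_d) : Prop :=
  (exists k (v : 'rV[R]_d), v != 0 /\ a' = take k a ++ v :: drop k a)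
  \/ (exists2 k, (k < size a)%N & a' = take k a ++ drop k.+1 a).

End Defs.

(* Main.v *)
Require Import Defs.
From HB Require Import structures.
From mathcomp Require Import all_boot all_order all_algebra.
From mathcomp Require Import ring lra.
Import Order.TTheory GRing.Theory Num.Theory.
Local Open Scope ring_scope.

Section N.
Context {R : rcfType} {d : nat}.
Implicit Types u v : 'rV[R]_d.

Lemma dotv_ge0 u : 0 <= dotv u u.
Proof. by apply: sumr_ge0 => j _; rewrite -expr2 sqr_ge0. Qed.

Lemma dotv_lin p q u v : dotv (p *: u + q *: v) (p *: u + q *: v) =
  p^+2 * dotv u u + 2 * p * q * dotv u v + q^+2 * dotv v v.
Proof.
rewrite /dotv !mulr_sumr -!big_split /=; apply: eq_bigr => j _; rewrite !mxE; ring.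
Qed.

Lemma dotvC u v : dotv u v = dotv v u.
Proof. by apply: eq_bigr => j _; rewrite mulrC. Qed.

Lemma dotv0 u v : dotv u u = 0 -> dotv u v = 0.
Proof.
move=> H; have H2 : forall j, u 0 j * u 0 j = 0.
  move=> j; apply/eqP; move/eqP: H; rewrite psumr_eq0; last by move=> i _; rewrite -expr2 sqr_ge0.
  by move/allP/(_ j (mem_index_enum _)) => /implyP; apply.
rewrite /dotv big1 // => j _; by have /eqP := H2 j; rewrite mulf_eq0 orbb => /eqP ->; rewrite mul0r.
Qed.

Lemma norm2_ge0 u : 0 <= norm2 u.
Proof. exact: sqrtr_ge0. Qed.

Lemma norm2_sq u : norm2 u ^+ 2 = dotv u u.
Proof. by rewrite sqr_sqrtr // dotv_ge0. Qed.

Lemma norm2_le u c : 0 <= c -> dotv u u <= c ^+ 2 -> norm2 u <= c.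
Proof.
move=> c0 h; rewrite /norm2 -(ger0_norm c0) -sqrtr_sqr; exact: ler_wsqrtr.
Qed.

Lemma cauchy u v : dotv u v <= norm2 u * norm2 v.
Proof.
have [a0|an0] := eqVneq (norm2 u) 0.
  have: dotv u u = 0 by rewrite -norm2_sq a0 expr0n.
  by move=> h; rewrite (_ : dotv u v = 0) ?a0 ?mul0r //; apply: dotv0.
have [b0|bn0] := eqVneq (norm2 v) 0.
  have: dotv v v = 0 by rewrite -norm2_sq b0 expr0n.
  by move=> h; rewrite (_ : dotv u v = 0) ?b0 ?mulr0 //; rewrite dotvC; apply: dotv0.
have h := dotv_ge0 (norm2 v *: u + (- norm2 u) *: v).
rewrite dotv_lin -!norm2_sq in h.
have ha : 0 < norm2 u by rewrite lt0r an0 norm2_ge0.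
have hb : 0 < norm2 v by rewrite lt0r bn0 norm2_ge0.
set a := norm2 u in h ha *; set b := norm2 v in h hb *.
have hab : 0 < a * b by rewrite mulr_gt0.
nra.
Qed.

Lemma norm2_triangle u v : norm2 (u + v) <= norm2 u + norm2 v.
Proof.
apply: norm2_le; first by rewrite addr_ge0 // norm2_ge0.
have := dotv_lin 1 1 u v; rewrite !scale1r => ->.
have := cauchy u v; rewrite -!norm2_sq; nra.
Qed.

Lemma norm2Z k u : norm2 (k *: u) = `|k| * norm2 u.
Proof.
have := dotv_lin k 0 u u; rewrite scale0r addr0 => h.
rewrite /norm2 h; rewrite expr0n /= !mulr0 !mul0r !addr0 sqrtrM ?sqr_ge0 //.
by rewrite sqrtr_sqr.
Qed.

Lemma norm2N u : norm2 (- u) = norm2 u.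
Proof. by rewrite -scaleN1r norm2Z normrN normr1 mul1r. Qed.

Lemma norm2_unit u : norm2 (unitv u) <= 1.
Proof.
rewrite /unitv norm2Z ger0_norm ?invr_ge0 ?norm2_ge0 //.
have [a0|an0] := eqVneq (norm2 u) 0; first by rewrite a0 mulr0.
by rewrite mulVf.
Qed.

Lemma norm2_sum {I : Type} (s : seq I) (P : pred I) (F : I -> 'rV[R]_d) :
  norm2 (\sum_(i <- s | P i) F i) <= \sum_(i <- s | P i) norm2 (F i).
Proof.
elim: s => [|x s IH]; first by rewrite !big_nil /norm2 /dotv big1 ?sqrtr0 // => j _; rewrite mxE mul0r.
rewrite !big_cons; case: (P x) => //.
by apply: le_trans (norm2_triangle _ _) _; rewrite lerD2l.
Qed.
End N.

Section C.
Context {R : rcfType} {d : nat}.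

Definition St (x v : 'rV[R]_d) : bool := dotv (unitv v) x <= 0.
Definition Pg (g v : 'rV[R]_d) : bool := 0 <= dotv (unitv v) g.

Lemma card_Sset a x : #|Sset a x| = count (St x) a.
Proof.
rewrite -sum1_count (big_nth 0) big_mkord -sum1_card.
by apply: eq_bigl => i; rewrite inE.
Qed.

Lemma cvecE a T (xs : 'I_T -> 'rV[R]_d) g : cvec a xs g =
  T%:R^-1 *: \sum_(t < T) (count (St (xs t)) a)%:R^-1 *:
     \sum_(v <- a | Pg g v && St (xs t) v) unitv v.
Proof.
rewrite /cvec /lambar.
under eq_bigr => i _ do rewrite -scalerA scaler_suml.
rewrite -scaler_sumr exchange_big /=; congr (_ *: _).
apply: eq_bigr => t _.
rewrite (big_nth 0) big_mkord big_mkcondr scaler_sumr /=.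
apply: eq_big => [i|i _]; first by rewrite inE.
rewrite -card_Sset /Sset inE /St /vec.
by case: ifP => _; rewrite ?mul1r ?mul0r ?scale0r ?scaler0 // mulrC.
Qed.
End C.

Section K.
Context {R : rcfType} {d : nat}.

Lemma scal_ineq (c m : R) : 1 <= m -> m <= c ->
  (1 + c)^-1 * 1 + `|(1 + c)^-1 - c^-1| * c <= 2 / m.
Proof.
move=> m1 mc.
have c0 : 0 < c by lra.
have c1 : 0 < 1 + c by lra.
have -> : (1 + c)^-1 - c^-1 = - (c^-1 - (1 + c)^-1) by ring.
have hpos : 0 <= c^-1 - (1 + c)^-1.
  rewrite subr_ge0 lef_pV2 ?posrE //; lra.
rewrite normrN ger0_norm //.
have -> : (1 + c)^-1 * 1 + (c^-1 - (1 + c)^-1) * c = 2 / (1 + c).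
  by field; apply/andP; split; rewrite gt_eqF.
rewrite ler_pM2l // lef_pV2 ?posrE //; lra.
Qed.

Lemma sum_unit_le (s : seq 'rV[R]_d) (P : pred 'rV[R]_d) :
  norm2 (\sum_(v <- s | P v) unitv v) <= (count P s)%:R.
Proof.
apply: le_trans (norm2_sum _ _ _) _.
elim: s => [|x s IH]; first by rewrite big_nil.
rewrite big_cons /=; case: (P x) => /=; last by rewrite add0n.
by rewrite natrD lerD // norm2_unit.
Qed.

Lemma key (w : 'rV[R]_d) a T (xs : 'I_T -> 'rV[R]_d) g (m : nat) :
  (0 < m)%N -> (0 < T)%N -> (forall t, m <= count (St (xs t)) a)%N ->
  norm2 (cvec (w :: a) xs g - cvec a xs g) <= 2 / m%:R.
Proof.
move=> m0 T0 hm.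
rewrite !cvecE -scalerBr -sumrB norm2Z ger0_norm ?invr_ge0 ?ler0n //.
have hT : 0 < T%:R :> R by rewrite ltr0n.
rewrite ler_pdivrMl // (le_trans (norm2_sum _ _ _)) //.
apply: le_trans (_ : \sum_(t < T) (2 / m%:R) <= _).
  apply: ler_sum => t _.
  set c := count (St (xs t)) a.
  set B := \sum_(v <- a | Pg g v && St (xs t) v) unitv v.
  have hB : norm2 B <= c%:R.
    apply: le_trans (sum_unit_le _ _) _; rewrite ler_nat; apply: sub_count.
    by move=> v /andP [].
  rewrite /= big_cons; case hw: (St (xs t) w); last first.
    by rewrite andbF add0n subrr /norm2 /dotv big1 ?sqrtr0 ?divr_ge0 ?ler0n // => j _; rewrite mxE mul0r.
  rewrite andbT add1n.
  set z := (if Pg g w then unitv w + B else B).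
  have -> : z = (if Pg g w then unitv w else 0) + B by rewrite /z; case: (Pg g w); rewrite ?add0r.
  have hz : norm2 (if Pg g w then unitv w else 0) <= 1.
    case: (Pg g w); first exact: norm2_unit.
    by rewrite /norm2 /dotv big1 ?sqrtr0 // => j _; rewrite mxE mul0r.
  rewrite scalerDr -addrA -scalerBl.
  apply: le_trans (norm2_triangle _ _) _; rewrite !norm2Z.
  have hm1 : 1 <= m%:R :> R by rewrite ler1n.
  have hmc : m%:R <= c%:R :> R by rewrite ler_nat hm.
  rewrite -/c; apply: le_trans (scal_ineq _ _ hm1 hmc); rewrite -natr1 (addrC c%:R 1).
  have hc0 : 0 <= c%:R :> R by rewrite ler0n.
  apply: lerD.
    rewrite ger0_norm ?invr_ge0; last lra.
    by rewrite ler_wpM2l // invr_ge0; lra.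
  by rewrite ler_wpM2l.
by rewrite sumr_const card_ord [T%:R * _]mulrC mulr_natr.
Qed.
End K.

Lemma cvec_perm {R : rcfType} {d : nat} (a b : seq 'rV[R]_d) T (xs : 'I_T -> 'rV[R]_d) g :
  perm_eq a b -> cvec a xs g = cvec b xs g.
Proof.
move=> P; rewrite !cvecE; congr (_ *: _); apply: eq_bigr => t _.
by rewrite ((permP P) (St (xs t))) (perm_big _ P).
Qed.

Theorem claim3p5 (R : rcfType) (d : nat) (a a' : seq 'rV[R]_d) (T : nat)
  (xs : 'I_T -> 'rV[R]_d) (g : 'rV[R]_d) (m : nat) :
  (1 <= T)%N ->
  all (fun v => v != 0) a ->
  neighbor a a' ->
  (forall t, (1 <= #|Sset a (xs t)|)%N) ->
  (forall t, (1 <= #|Sset a' (xs t)|)%N) ->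
  (* m = min_t min(m^(t), m'^(t)) *)
  (exists t, m = minn #|Sset a (xs t)| #|Sset a' (xs t)|) ->
  (forall t, (m <= minn #|Sset a (xs t)| #|Sset a' (xs t)|)%N) ->
  norm2 (cvec a xs g - cvec a' xs g) <= 2 / m%:R.
Proof.
move=> T1 _ hn hS hS' [t0 em] hm.
have m0 : (0 < m)%N by rewrite em leq_min hS hS'.
have hma : forall t, (m <= count (St (xs t)) a)%N.
  by move=> t; rewrite -card_Sset; apply: leq_trans (hm t) _; apply: geq_minl.
have hma' : forall t, (m <= count (St (xs t)) a')%N.
  by move=> t; rewrite -card_Sset; apply: leq_trans (hm t) _; apply: geq_minr.
case: hn => [[k [v [_ ea']]] | [k hk ea']].
  have P : perm_eq a' (v :: a).
    by rewrite ea' (perm_catCA (take k a) [:: v]) /= cat_take_drop.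
  rewrite (cvec_perm _ _ _ _ _ P) -opprB norm2N; exact: key.
have P : perm_eq a (nth 0 a k :: a').
  rewrite ea' -[X in perm_eq X](cat_take_drop k a) (drop_nth 0 hk).
  by rewrite (perm_catCA (take k a) [:: _]).
rewrite (cvec_perm _ _ _ _ _ P); exact: key.
Qed.
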